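(* Let $P$ be a finite poset and $R$ a commutative unital ring. Then $$Z^3_2(P,R)=Z^3_1(P,R)^2=\mathrm{span}_R\{e_{xxy}+e_{xyy}: x,y\in P,\ l(x,y)=1\}\oplus J^3_2(P,R).$$ In particular, $Z^3_2(P,R)$ is a subalgebra of $I^3(P,R)$.
   Context: For a finite poset $P$, $P^3_\le=\{(x,y,z)\in P^3: x\le y\le z\}$, and $I^3(P,R)$ is the $R$-module of functions $f:P^3_\le\to R$ with multiplication $(fg)(x_1,x_2,x_3)=\sum f(x_1,y_1,y_2)g(y_1,y_2,x_3)$ over all $x_1\le y_1\le x_2\le y_2\le x_3$. For $x\le y\le z$, $e_{xyz}$ is the function equal to $1$ at $(x,y,z)$ and $0$ elsewhere. For $a\le b$, $l(a,b)$ is the maximum of $|C|-1$ over chains $C$ in the interval $[a,b]$. $J^3_k(P,R)=\{f: f(x_1,x_2,x_3)=0 \text{ whenever } l(x_1,x_3)<k\}$. $[f,g]=fg-gf$; for subsets $U,V$, $[U,V]$ (resp. $UV$) is the $R$-submodule spanned by all $[u,v]$ (resp. $uv$), $u\in U,v\in V$, and $U^2=UU$. $Z^3_1(P,R)=J^3_1(P,R)$, $Z^3_2(P,R)=[Z^3_1(P,R),Z^3_1(P,R)]$. *)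

(* Defs.v *)
From HB Require Import structures.
From mathcomp Require Import all_boot all_order all_algebra.
Set Implicit Arguments. Unset Strict Implicit. Unset Printing Implicit Defensive.
Import Order.TTheory GRing.Theory.
Local Open Scope order_scope.

Section Incidence3.
Variables (d : Order.disp_t) (P : finPOrderType d) (R : comNzRingType).

(* Elements of I^3(P,R) are represented as functions on P^3 that vanish
   outside P^3_<= . *)
Local Notation fn3 := {ffun P * P * P -> R^o}.

Definition inI3 (f : fn3) : Prop :=
  forall x y z : P, ~~ ((x <= y) && (y <= z)) -> f (x, y, z) = 0%R.

Definition mul3 (f g : fn3) : fn3 :=
  [ffun t : P * P * P => let: (x1, x2, x3) := t in
     (\sum_(y1 : P) \sum_(y2 : P)
        if [&& (x1 <= y1)%O, (y1 <= x2)%O, (x2 <= y2)%O & (y2 <= x3)%O]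
        then f (x1, y1, y2) * g (y1, y2, x3) else 0)%R].

Definition e3 (x y z : P) : fn3 :=
  [ffun t : P * P * P => if t == (x, y, z) then 1%R else 0%R].

Definition is_chain (C : {set P}) : bool :=
  [forall u in C, forall v in C, (u <= v) || (v <= u)].

Definition len (a b : P) : nat :=
  \max_(C : {set P} | is_chain C && (C \subset [set z | (a <= z) && (z <= b)]))
     (#|C|).-1.

Definition J3 (k : nat) (f : fn3) : Prop :=
  inI3 f /\ forall x1 x2 x3 : P, (len x1 x3 < k)%N -> f (x1, x2, x3) = 0%R.

Definition span3 (S : fn3 -> Prop) (v : fn3) : Prop :=
  exists (n : nat) (c : 'I_n -> R) (g : 'I_n -> fn3),
    (forall i, S (g i)) /\ v = (\sum_(i < n) c i *: g i)%R.

Definition Z1 := J3 1.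

Definition Z2 : fn3 -> Prop :=
  span3 (fun h => exists f g, Z1 f /\ Z1 g /\ h = (mul3 f g - mul3 g f)%R).

Definition Z1sq : fn3 -> Prop :=
  span3 (fun h => exists f g, Z1 f /\ Z1 g /\ h = mul3 f g).

Definition Egen : fn3 -> Prop :=
  span3 (fun h => exists x y : P, [/\ x <= y, len x y = 1%N &
                                     h = (e3 x x y + e3 x y y)%R]).

End Incidence3.

Notation fn3 P R := {ffun (P * P * P)%type -> R^o}.

(* Main.v *)
Require Import Defs.
From HB Require Import structures.
From mathcomp Require Import all_boot all_order all_algebra.
Import Order.TTheory GRing.Theory.
Set Implicit Arguments. Unset Strict Implicit. Unset Printing Implicit Defensive.

Section Aux.
Variables (d : Order.disp_t) (P : finPOrderType d) (R : comNzRingType).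
Local Notation F := (fn3 P R).
Local Open Scope ring_scope.

Definition closedQ (Q : F -> Prop) :=
  [/\ Q 0, (forall f g, Q f -> Q g -> Q (f + g)) & (forall c f, Q f -> Q (c *: f))].

Lemma span3_ind (S Q : F -> Prop) : closedQ Q -> (forall h, S h -> Q h) ->
  forall v, span3 S v -> Q v.
Proof.
case=> Q0 QD QZ SQ v [n [c [g [Sg ->]]]].
by elim/big_ind: _ => // i _; apply: QZ; apply: SQ.
Qed.

Lemma span3_gen (S : F -> Prop) h : S h -> span3 S h.
Proof.
move=> Sh; exists 1%N, (fun _ => 1), (fun _ => h); split => //.
by rewrite big_ord1 scale1r.
Qed.

Lemma span3_closed (S : F -> Prop) : closedQ (span3 S).
Proof.
split.
- by exists 0%N, (fun _ => 0), (fun _ => 0); split; [case | rewrite big_ord0].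
- move=> f g [n1 [c1 [g1 [S1 ->]]]] [n2 [c2 [g2 [S2 ->]]]].
  exists (n1 + n2)%N, (fun i => match split i with inl j => c1 j | inr j => c2 j end),
    (fun i => match split i with inl j => g1 j | inr j => g2 j end); split.
    by move=> i; case: (split i).
  rewrite big_split_ord /=; congr (_ + _); apply: eq_bigr => i _.
    by have := unsplitK (inl i : 'I_n1 + 'I_n2) => /= ->.
  by have := unsplitK (inr i : 'I_n1 + 'I_n2) => /= ->.
- move=> k f [n [c [g [Sg ->]]]]; exists n, (fun i => k * c i), g; split => //.
  by rewrite scaler_sumr; apply: eq_bigr => i _; rewrite scalerA.
Qed.

Lemma span3_sub (S T : F -> Prop) : (forall h, S h -> span3 T h) ->
  forall v, span3 S v -> span3 T v.
Proof. by move=> ST; apply: span3_ind => //; apply: span3_closed. Qed.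

Lemma closedQ_sum (Q : F -> Prop) (I : finType) (p : pred I) (G : I -> F) :
  closedQ Q -> (forall i, p i -> Q (G i)) -> Q (\sum_(i | p i) G i).
Proof. by case=> Q0 QD _ H; elim/big_ind: _. Qed.

Lemma J3_closed k : closedQ (@J3 d P R k).
Proof.
split.
- by split => [x y z _|x y z _]; rewrite ffunE.
- move=> f g [f1 f2] [g1 g2]; split => [x y z H|x y z H]; rewrite ffunE.
    by rewrite f1 ?g1 ?addr0.
  by rewrite f2 ?g2 ?addr0.
- move=> c f [f1 f2]; split => [x y z H|x y z H]; rewrite ffunE.
    by rewrite f1 ?scaler0.
  by rewrite f2 ?scaler0.
Qed.


Local Open Scope order_scope.

Lemma mul3_e3 (a b c a' b' c' x1 x2 x3 : P) :
  mul3 (e3 R a b c) (e3 R a' b' c') (x1, x2, x3) =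
  if [&& a' == b, b' == c, x1 == a, x3 == c', a <= b, b <= x2, x2 <= c & c <= c']
  then 1%R else 0%R.
Proof.
rewrite ffunE /= (bigD1 b) //= [X in _ + X]big1 => [|y1 ney1]; last first.
  by apply: big1 => y2 _; rewrite !ffunE !xpair_eqE (negbTE ney1) andbF mul0r if_same.
rewrite addr0 (bigD1 c) //= [X in _ + X]big1 => [|y2 ney2]; last first.
  by rewrite !ffunE !xpair_eqE (negbTE ney2) andbF mul0r if_same.
rewrite addr0 !ffunE !xpair_eqE !eqxx !andbT [b == a']eq_sym [c == b']eq_sym.
case: (x1 =P a) => [->|_]; case: (x3 =P c') => [->|_].
all: by case: (a' == b); case: (b' == c); rewrite /= ?andbF ?andbT /= ?mul0r ?mulr0 ?mul1r ?mulr1 ?if_same.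
Qed.


Lemma len_refl (a : P) : len a a = 0%N.
Proof.
apply/eqP; rewrite -leqn0; apply/bigmax_leqP => C /andP[_ sub].
have : (#|C| <= #|[set a]|)%N.
  apply: subset_leq_card; apply: (subset_trans sub); apply/subsetP => z.
  by rewrite !inE => /andP[h1 h2]; apply/eqP/le_anti; rewrite h1 h2.
by rewrite cards1; case: #|C| => [|[]].
Qed.

Lemma len_lt (a c : P) : a < c -> (1 <= len a c)%N.
Proof.
move=> ac; have ac' := ltW ac.
have := @leq_bigmax_cond _ (fun C : {set P} => is_chain C && (C \subset [set z | (a <= z) && (z <= c)]))
  (fun C => (#|C|).-1) [set a; c].
rewrite cards2 (lt_eqF ac) /=; apply.
apply/andP; split.
  apply/forallP => u; apply/implyP; rewrite !inE => /orP[]/eqP->;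
  apply/forallP => v; apply/implyP; rewrite !inE => /orP[]/eqP->; by rewrite ?lexx ?ac' ?orbT.
by apply/subsetP => z; rewrite !inE => /orP[]/eqP->; rewrite ?lexx ?ac'.
Qed.

Lemma len_mid (a u c : P) : a < u -> u < c -> (2 <= len a c)%N.
Proof.
move=> au uc; have ac := lt_trans au uc.
have au' := ltW au; have uc' := ltW uc; have ac' := ltW ac.
have := @leq_bigmax_cond _ (fun C : {set P} => is_chain C && (C \subset [set z | (a <= z) && (z <= c)]))
  (fun C => (#|C|).-1) (a |: [set u; c]).
rewrite cardsU1 cards2 !inE (lt_eqF uc) (lt_eqF au) (lt_eqF ac) /=; apply.
apply/andP; split.
  apply/forallP => x; apply/implyP; rewrite !inE => /orP[/eqP->|/orP[]/eqP->];
  apply/forallP => y; apply/implyP; rewrite !inE => /orP[/eqP->|/orP[]/eqP->];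
  by rewrite ?lexx ?ac' ?au' ?uc' ?orbT.
by apply/subsetP => z; rewrite !inE => /orP[/eqP->|/orP[]/eqP->]; rewrite ?lexx ?ac' ?au' ?uc'.
Qed.

Lemma len_le1 (a c : P) : (forall z, a < z -> z < c -> False) -> (len a c <= 1)%N.
Proof.
move=> H; apply/bigmax_leqP => C /andP[_ sub].
have : (#|C| <= #|[set a; c]|)%N.
  apply: subset_leq_card; apply: (subset_trans sub); apply/subsetP => z.
  rewrite !inE => /andP[h1 h2].
  case: (z =P a) => // /eqP za; case: (z =P c) => // /eqP zc.
  by exfalso; apply: (H z); rewrite lt_neqAle ?h1 ?h2 // ?andbT // eq_sym.
rewrite cards2; case: (a != c) => /=; case: #|C| => [|[|[]]] //.
Qed.

Lemma len_ge2 (a c : P) : (2 <= len a c)%N -> exists u, a < u /\ u < c.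
Proof.
move=> H; case: (boolP [exists u, (a < u) && (u < c)]) => [/existsP[u /andP[]]|/existsPn N].
  by exists u.
have := len_le1 (a := a) (c := c); rewrite leqNgt H => /(_ _)/negP; case.
  by move=> z az zc; have := N z; rewrite az zc.
done.
Qed.


Local Notation E := (@e3 d P R).

Lemma e3E a b c t : E a b c t = if t == (a, b, c) then 1%R else 0%R.
Proof. by rewrite ffunE. Qed.

Lemma mul3_e3_0 (a b c a' b' c' : P) : ~~ ((a' == b) && (b' == c)) ->
  mul3 (E a b c) (E a' b' c') = 0%R.
Proof.
move=> H; apply/ffunP => [[[x1 x2] x3]]; rewrite mul3_e3 ffunE.
by move: H; case: (a' == b); case: (b' == c).
Qed.

Lemma mul3_pt (a b c e x1 x2 x3 : P) :
  mul3 (E a b c) (E b c e) (x1, x2, x3) =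
  if [&& x1 == a, x3 == e, a <= b, b <= x2, x2 <= c & c <= e] then 1%R else 0%R.
Proof. by rewrite mul3_e3 !eqxx. Qed.

Lemma e3_Z1 (a b c : P) : a <= b -> b <= c -> a < c -> Z1 (E a b c).
Proof.
move=> ab bc ac; split => x y z; rewrite e3E !xpair_eqE.
  by case: (x =P a) => [->|_]; case: (y =P b) => [->|_]; case: (z =P c) => [->|_] //=; rewrite ab bc.
case: (x =P a) => [->|_]; case: (y =P b) => [_|_]; case: (z =P c) => [->|_] //=.
by rewrite ltnNge len_lt.
Qed.

Lemma mul3Dl (f g h : F) : mul3 (f + g)%R h = (mul3 f h + mul3 g h)%R.
Proof.
apply/ffunP => [[[x1 x2] x3]]; rewrite !ffunE /= -big_split; apply: eq_bigr => y1 _.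
rewrite -big_split; apply: eq_bigr => y2 _; rewrite !ffunE.
case: ifP => _; rewrite ?mulrDl //; exact: (esym (addr0 _)).
Qed.

Lemma mul3Dr (f g h : F) : mul3 h (f + g)%R = (mul3 h f + mul3 h g)%R.
Proof.
apply/ffunP => [[[x1 x2] x3]]; rewrite !ffunE /= -big_split; apply: eq_bigr => y1 _.
rewrite -big_split; apply: eq_bigr => y2 _; rewrite !ffunE.
case: ifP => _; rewrite ?mulrDr //; exact: (esym (addr0 _)).
Qed.

Lemma mul3Zl (k : R) (f h : F) : mul3 (k *: f)%R h = (k *: mul3 f h)%R.
Proof.
apply/ffunP => [[[x1 x2] x3]]; rewrite !ffunE /= scaler_sumr; apply: eq_bigr => y1 _.
rewrite scaler_sumr; apply: eq_bigr => y2 _; rewrite !ffunE.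
by case: ifP => _; rewrite ?scaler0 // scalerAl.
Qed.

Lemma mul3Zr (k : R) (f h : F) : mul3 h (k *: f)%R = (k *: mul3 h f)%R.
Proof.
apply/ffunP => [[[x1 x2] x3]]; rewrite !ffunE /= scaler_sumr; apply: eq_bigr => y1 _.
rewrite scaler_sumr; apply: eq_bigr => y2 _; rewrite !ffunE.
by case: ifP => _; rewrite ?scaler0 // scalerAr.
Qed.

Lemma mul30l (h : F) : mul3 0%R h = 0%R.
Proof. by rewrite -[X in mul3 X _](scale0r (0 : F)) mul3Zl !scale0r. Qed.

Lemma mul30r (h : F) : mul3 h 0%R = 0%R.
Proof. by rewrite -[X in mul3 _ X](scale0r (0 : F)) mul3Zr !scale0r. Qed.

Lemma mul3_suml (I : finType) (G : I -> F) h :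
  mul3 (\sum_i G i)%R h = (\sum_i mul3 (G i) h)%R.
Proof.
exact: (big_morph (fun f => mul3 f h) (fun f g => mul3Dl f g h) (mul30l h)).
Qed.

Lemma mul3_sumr (I : finType) (G : I -> F) h :
  mul3 h (\sum_i G i)%R = (\sum_i mul3 h (G i))%R.
Proof.
exact: (big_morph (fun f => mul3 h f) (fun f g => mul3Dr f g h) (mul30r h)).
Qed.

Lemma decomp (f : F) : f = (\sum_(t : P * P * P) f t *: E t.1.1 t.1.2 t.2)%R.
Proof.
apply/ffunP => x; rewrite sum_ffunE (bigD1 x) //= big1 => [|t ntx].
  by rewrite addr0 ffunE e3E; case: x => [[]] /= *; rewrite eqxx; rewrite /GRing.scale /= mulr1.
rewrite ffunE e3E; case: t ntx => [[t1 t2] t3] /=; rewrite eq_sym => /negbTE ->.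
by rewrite /GRing.scale /= mulr0.
Qed.


Definition BP (h : F) := exists a b c e, [/\ a <= b, b <= c, c <= e, a < c & b < e] /\
  h = mul3 (E a b c) (E b c e).
Definition SP := span3 BP.

Lemma Z1_supp (f : F) x y z : Z1 f -> f (x, y, z) != 0%R -> [/\ x <= y, y <= z & x < z].
Proof.
case=> f1 f2 nz.
have /andP[xy yz] : (x <= y) && (y <= z).
  by apply/negP => H; move/eqP: nz; apply; apply: f1; apply/negP.
split => //; rewrite lt_neqAle (le_trans xy yz) andbT.
apply/negP => /eqP exz; move/eqP: nz; apply; apply: f2; by rewrite exz len_refl.
Qed.

Lemma SP_closed : closedQ SP.
Proof. exact: span3_closed. Qed.

Lemma SP0 : SP 0%R.
Proof. by case: SP_closed. Qed.

Lemma SPZ k f : SP f -> SP (k *: f)%R.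
Proof. by case: SP_closed => _ _; apply. Qed.

Lemma Z1_mul_SP f g : Z1 f -> Z1 g -> SP (mul3 f g).
Proof.
move=> Zf Zg.
rewrite [f]decomp [g]decomp mul3_suml.
apply: closedQ_sum => [|t _]; first exact: SP_closed.
rewrite mul3Zl mul3_sumr scaler_sumr; apply: closedQ_sum => [|s _]; first exact: SP_closed.
rewrite mul3Zr.
case: t => [[a b] c]; case: s => [[a' b'] c'] /=.
have [->|nf] := eqVneq (f (a, b, c)) 0%R; first by rewrite scale0r; exact: SP0.
have [->|ng] := eqVneq (g (a', b', c')) 0%R; first by rewrite scale0r scaler0; exact: SP0.
apply: SPZ; apply: SPZ.
have [/andP[/eqP e1 /eqP e2]|ne] := boolP ((a' == b) && (b' == c)); last first.
  by rewrite mul3_e3_0 //; exact: SP0.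
subst a' b'.
have [ab bc ac] := Z1_supp Zf nf; have [bc' cc' bc''] := Z1_supp Zg ng.
by apply: span3_gen; exists a, b, c, c'.
Qed.


Lemma BP_Z2 (h : F) : BP h -> Z2 h.
Proof.
case=> a [b [c [e [[ab bc ce ac be] ->]]]].
apply: span3_gen; exists (E a b c), (E b c e); split; [|split].
- exact: e3_Z1 ab bc ac.
- by apply: e3_Z1 => //; rewrite ltW.
- by rewrite (@mul3_e3_0 b c e a b c) ?subr0 // (lt_eqF ac).
Qed.

Lemma SP_Z2 (f : F) : SP f -> Z2 f.
Proof. by apply: span3_sub => h /BP_Z2. Qed.

Lemma Z1sq_SP (f : F) : Z1sq f -> SP f.
Proof. by apply: span3_sub => h [u [v [Zu [Zv ->]]]]; apply: Z1_mul_SP. Qed.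

Lemma Z2_Z1sq (f : F) : Z2 f -> Z1sq f.
Proof.
apply: span3_sub => h [u [v [Zu [Zv ->]]]].
have [_ HD HZ] := span3_closed (fun h => exists f g, Z1 f /\ Z1 g /\ h = mul3 f g).
rewrite -scaleN1r; apply: HD; first by apply: span3_gen; exists u, v.
by apply: HZ; apply: span3_gen; exists v, u.
Qed.

Lemma SP_Z1 (f : F) : SP f -> Z1 f.
Proof.
apply: span3_ind; first exact: J3_closed.
move=> h [a [b [c [e [[ab bc ce ac be] ->]]]]].
split => x1 x2 x3 H; rewrite mul3_pt; case: ifP => // /and5P[/eqP ex1 /eqP ex3 _ bx /andP[xc _]];
  move: H; rewrite ex1 ex3.
  by rewrite (le_trans ab bx) (le_trans xc ce).
by rewrite ltnNge len_lt // (lt_le_trans ac ce).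
Qed.


Lemma mul3_gen (a e : P) : a < e -> (len a e < 2)%N ->
  mul3 (E a a e) (E a e e) = (E a a e + E a e e)%R.
Proof.
move=> ae hl; have ae' := ltW ae; have nae := lt_eqF ae.
apply/ffunP => [[[x1 x2] x3]]; rewrite mul3_pt !ffunE !xpair_eqE !lexx /=.
case: (x1 =P a) => [_|_]; case: (x3 =P e) => [_|_]; rewrite /= ?andbF ?addr0 //.
case: (x2 =P a) => [->|na]; first by rewrite lexx ae' nae /= addr0.
case: (x2 =P e) => [->|ne]; first by rewrite lexx ae' /= add0r.
rewrite /= ?add0r; case: ifP => // /and3P[h1 h2 _]; exfalso.
move: hl; rewrite ltnNge (@len_mid a x2 e) //.
  by rewrite lt_neqAle h1 andbT eq_sym; apply/eqP.
by rewrite lt_neqAle h2 andbT; apply/eqP.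
Qed.

Definition EJ (f : F) := exists a b, [/\ Egen a, J3 2 b & f = (a + b)%R].

Lemma EJ_closed : closedQ EJ.
Proof.
have [E0 ED EZ] := span3_closed (fun h => exists x y : P, [/\ x <= y, len x y = 1%N &
                                     h = (E x x y + E x y y)%R]).
have [J0 JD JZ] := J3_closed 2.
split.
- by exists 0%R, 0%R; rewrite addr0.
- move=> f g [a1 [b1 [A1 B1 ->]]] [a2 [b2 [A2 B2 ->]]]; exists (a1 + a2)%R, (b1 + b2)%R.
  by split; [exact: ED | exact: JD | rewrite addrACA].
- move=> k f [a1 [b1 [A1 B1 ->]]]; exists (k *: a1)%R, (k *: b1)%R.
  by split; [exact: EZ | exact: JZ | rewrite scalerDr].
Qed.

Lemma SP_EJ (f : F) : SP f -> EJ f.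
Proof.
apply: span3_ind; first exact: EJ_closed.
move=> h [a [b [c [e [[ab bc ce ac be] ->]]]]].
have ae := lt_le_trans ac ce.
case: (leqP 2 (len a e)) => hl.
  exists 0%R, (mul3 (E a b c) (E b c e)); split; last by rewrite add0r.
    by case: (span3_closed (fun h => exists x y : P, [/\ x <= y, len x y = 1%N &
                                     h = (E x x y + E x y y)%R])).
  split => x1 x2 x3 H; rewrite mul3_pt; case: ifP => // /and5P[/eqP ex1 /eqP ex3 _ bx /andP[xc _]];
    move: H; rewrite ex1 ex3.
    by rewrite (le_trans ab bx) (le_trans xc ce).
  by rewrite ltnNge hl.
have eab : b = a.
  case: (boolP (a < b)) => [ab'|]; first by move: hl; rewrite ltnNge (len_mid ab' be).
  by rewrite lt_neqAle ab andbT negbK => /eqP ->.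
have ece : c = e.
  case: (boolP (c < e)) => [ce'|]; first by move: hl; rewrite ltnNge (len_mid ac ce').
  by rewrite lt_neqAle ce andbT negbK => /eqP ->.
subst b c.
exists (mul3 (E a a e) (E a e e)), 0%R; split; last by rewrite addr0.
  apply: span3_gen; exists a, e; split; [exact: bc | | exact: mul3_gen].
  by apply/eqP; rewrite eqn_leq -ltnS hl len_lt.
by case: (J3_closed 2).
Qed.


Lemma Egen_SP (f : F) : Egen f -> SP f.
Proof.
apply: span3_sub => h [x [y [xy hl ->]]].
have nxy : x != y by apply/eqP => exy; move: hl; rewrite exy len_refl.
have lxy : x < y by rewrite lt_neqAle nxy xy.
rewrite -mul3_gen //; last by rewrite hl.
by apply: span3_gen; exists x, x, y, y; split.
Qed.

Lemma sum_e3_pt (a c : P) (p : pred P) x1 x2 x3 :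
  (\sum_(x | p x) E a x c)%R (x1, x2, x3) =
  if [&& x1 == a, x3 == c & p x2] then 1%R else 0%R.
Proof.
rewrite sum_ffunE; under eq_bigr => x _ do rewrite e3E !xpair_eqE.
case: (x1 =P a) => [_|_]; case: (x3 =P c) => [_|_] /=;
  try by (rewrite big1 // => x _; rewrite /= ?andbF).
case: (boolP (p x2)) => px.
  rewrite (bigD1 x2) //= big1 ?addr0 ?eqxx // => x /andP[_ nx].
  by rewrite eq_sym (negbTE nx).
rewrite big1 // => x px'.
by case: (x2 =P x) => [ex|] //; move: px; rewrite ex px'.
Qed.

Lemma SP_inner (a x c : P) : a < x -> x < c -> SP (E a x c).
Proof.
move=> ax xc.
have -> : E a x c = mul3 (E a x x) (E x x c).
  apply/ffunP => [[[x1 x2] x3]]; rewrite mul3_pt e3E !xpair_eqE (ltW ax) (ltW xc).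
  idtac.
  by case: (x1 == a); case: (x3 == c); rewrite /= ?andbT ?andbF // eq_le andbC.
by apply: span3_gen; exists a, x, x, c; split; rewrite ?lexx ?(ltW ax) ?(ltW xc).
Qed.

Lemma SP_J2basis (a b c : P) : a <= b -> b <= c -> (2 <= len a c)%N -> SP (E a b c).
Proof.
move=> ab bc hl; have [u [au uc]] := len_ge2 hl.
have ac := lt_trans au uc.
have [SP0' SPD _] := SP_closed.
have SPN : forall g, SP g -> SP (- g)%R by move=> g Sg; rewrite -scaleN1r; apply: SPZ.
case: (b =P a) => [->|nba].
  have -> : E a a c = (mul3 (E a a u) (E a u c) - \sum_(x | ((a < x) && (x <= u))%O) E a x c)%R.
    apply/ffunP => [[[x1 x2] x3]]; rewrite e3E [in RHS]ffunE [X in _ + X]ffunE sum_e3_pt mul3_pt !xpair_eqE !lexx (ltW uc) /=.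
    case: (x1 == a); case: (x3 == c); rewrite /= ?andbF ?subr0 //.
    case: (x2 =P a) => [->|nx2]; first by rewrite lexx ltxx (ltW au) subr0.
    by rewrite lt_neqAle; move/eqP: nx2; rewrite eq_sym => /negbTE ->; rewrite /= andbT subrr.
  apply: SPD; first by apply: span3_gen; exists a, a, u, c; split; rewrite ?lexx ?(ltW au) ?(ltW uc).
  apply: SPN; apply: closedQ_sum => [|x /andP[ax xu]]; first exact: SP_closed.
  by apply: SP_inner => //; apply: le_lt_trans uc.
case: (b =P c) => [->|nbc].
  have -> : E a c c = (mul3 (E a u c) (E u c c) - \sum_(x | ((u <= x) && (x < c))%O) E a x c)%R.
    apply/ffunP => [[[x1 x2] x3]]; rewrite e3E [in RHS]ffunE [X in _ + X]ffunE sum_e3_pt mul3_pt !xpair_eqE !lexx (ltW au) /=.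
    case: (x1 == a); case: (x3 == c); rewrite /= ?andbF ?subr0 //.
    case: (x2 =P c) => [->|nx2]; first by rewrite lexx ltxx (ltW uc) /= subr0.
    by rewrite [x2 < c]lt_neqAle; move/eqP: nx2 => /negbTE ->; rewrite /= andbT subrr.
  apply: SPD; first by apply: span3_gen; exists a, u, c, c; split; rewrite ?lexx ?(ltW au) ?(ltW uc).
  apply: SPN; apply: closedQ_sum => [|x /andP[ux xc]]; first exact: SP_closed.
  by apply: SP_inner => //; apply: lt_le_trans ux.
apply: SP_inner; rewrite lt_neqAle ?ab ?bc andbT; apply/eqP => //.
by move=> eab; apply: nba.
Qed.


Lemma J2_SP (f : F) : J3 2 f -> SP f.
Proof.
move=> Jf; have [f1 f2] := Jf.
rewrite [f]decomp; apply: closedQ_sum => [|[[a b] c] _ /=]; first exact: SP_closed.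
have [->|nf] := eqVneq (f (a, b, c)) 0%R; first by rewrite scale0r; exact: SP0.
apply: SPZ.
have /andP[ab bc] : (a <= b) && (b <= c).
  by apply/negP => H; move/eqP: nf; apply; apply: f1; apply/negP.
apply: SP_J2basis => //; rewrite leqNgt; apply/negP => H.
by move/eqP: nf; apply; apply: f2.
Qed.

Lemma EJ_SP (f : F) : EJ f -> SP f.
Proof.
case=> a [b [Ea Jb ->]]; have [_ SPD _] := SP_closed.
by apply: SPD; [apply: Egen_SP | apply: J2_SP].
Qed.

Lemma Egen_supp (f : F) : Egen f -> forall a b c, len a c != 1%N -> f (a, b, c) = 0%R.
Proof.
apply: (@span3_ind _ (fun f => forall a b c, len a c != 1%N -> f (a, b, c) = 0%R)).
  split.
  - by move=> a b c _; rewrite ffunE.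
  - by move=> f1 g1 Hf Hg a b c H; rewrite ffunE Hf ?Hg ?addr0.
  - by move=> k f1 Hf a b c H; rewrite ffunE Hf ?scaler0.
move=> h [x [y [xy hl ->]]] a b c H; rewrite ffunE !e3E !xpair_eqE.
case: (a =P x) => [ea|_]; case: (c =P y) => [ec|_]; rewrite /= ?andbF ?addr0 //.
by move: H; rewrite ea ec hl.
Qed.

Lemma direct (f : F) : Egen f -> J3 2 f -> f = 0%R.
Proof.
move=> Ef [_ Jf]; apply/ffunP => [[[a b] c]]; rewrite ffunE.
case: (boolP (len a c == 1%N)) => [/eqP h|h]; last exact: Egen_supp.
by apply: Jf; rewrite h.
Qed.

End Aux.

Theorem lemma2p5 (d : Order.disp_t) (P : finPOrderType d) (R : comNzRingType) :
  (* Z^3_2 = Z^3_1 ^2 *)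
  (forall f : fn3 P R, Z2 f <-> Z1sq f) /\
  (* Z^3_2 = span{e_xxy + e_xyy : l(x,y)=1} + J^3_2 *)
  (forall f : fn3 P R, Z2 f <-> exists a b, [/\ Egen a, J3 2 b & f = (a + b)%R]) /\
  (* the sum is direct *)
  (forall f : fn3 P R, Egen f -> J3 2 f -> f = 0%R) /\
  (* Z^3_2 is a subalgebra: an R-submodule closed under multiplication *)
  (Z2 (0%R : fn3 P R)) /\
  (forall (c : R) (f g : fn3 P R), Z2 f -> Z2 g -> Z2 (c *: f + g)%R) /\
  (forall f g : fn3 P R, Z2 f -> Z2 g -> Z2 (mul3 f g)).
Proof.
have Z2SP : forall f : fn3 P R, Z2 f -> SP f by move=> f /Z2_Z1sq /Z1sq_SP.
split; [|split; [|split; [|split; [|split]]]].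
- move=> f; split; first exact: Z2_Z1sq.
  by move/Z1sq_SP/SP_Z2.
- move=> f; split; first by move/Z2SP/SP_EJ.
  by move=> H; apply: SP_Z2; apply: EJ_SP.
- exact: direct.
- by case: (span3_closed (fun h : fn3 P R => exists f g, Z1 f /\ Z1 g /\ h = (mul3 f g - mul3 g f)%R)).
- move=> c f g Hf Hg.
  have [_ HD HZ] := span3_closed (fun h : fn3 P R => exists f g, Z1 f /\ Z1 g /\ h = (mul3 f g - mul3 g f)%R).
  by apply: HD => //; apply: HZ.
- move=> f g /Z2SP/SP_Z1 Zf /Z2SP/SP_Z1 Zg.
  by apply: SP_Z2; apply: Z1_mul_SP.
Qed.
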